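(* Let $q$ be a prime power and let $4\le h\le k$ be integers. Let $s\ge 0$ and $r\ge 1$ be integers, let $i_1,\ldots,i_s$ be distinct indices in $\{1,\ldots,h\}$ and $j_1,\ldots,j_r$ distinct indices in $\{h+1,\ldots,k\}$, and let $a_{i_1},\ldots,a_{i_s},b_{j_1},\ldots,b_{j_r}\in\mathbb{F}_q^*$. Let $\Lambda$ be the number of $(x_1,\ldots,x_k)\in\mathbb{F}_q^k$ satisfying $$a_{i_1}x_{i_1}+\cdots+a_{i_s}x_{i_s}+b_{j_1}x_{j_1}+\cdots+b_{j_r}x_{j_r}=0\quad\text{and}\quad (x_1+\cdots+x_h)\,x_1x_2\cdots x_h=0.$$ Then $$\Lambda=q^{k-1}-q^{k-h-1}(q-1)^h+\psi_{h}q^{k-h-1}=q^{k-h-1}\bigl(q^h+\psi_{h}-(q-1)^h\bigr).$$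
   Context: For an integer $m\ge 0$, $\psi_m$ denotes the number of $(x_1,\ldots,x_m)\in\mathbb{F}_q^m$ with $\sum_{i=1}^m x_i=0$ and $x_i\neq 0$ for all $i$ (so $\psi_0=1$). *)

(* Defs.v *)
From HB Require Import structures.
From mathcomp Require Import all_boot all_order all_algebra all_field.
Set Implicit Arguments. Unset Strict Implicit. Unset Printing Implicit Defensive.
Import GRing.Theory.
Local Open Scope ring_scope.

Definition psi (F : finFieldType) (m : nat) : nat :=
  #|[set x : {ffun 'I_m -> F} | (\sum_(i < m) x i == 0) && [forall i, x i != 0]]|.

(* Main.v *)
Require Import Defs.
From mathcomp Require Import all_boot all_order all_algebra all_field.
From mathcomp Require Import zify.
Import GRing.Theory.
Local Open Scope ring_scope.

Lemma split_l m n (a : 'I_m) : split (lshift n a) = inl a.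
Proof. exact: (@unsplitK m n (inl a)). Qed.
Lemma split_r m n (b : 'I_n) : split (rshift m b) = inr b.
Proof. exact: (@unsplitK m n (inr b)). Qed.

Lemma stepB (F : finType) h m (P : pred {ffun 'I_h -> F}) :
  #|[set x : {ffun 'I_(h+m) -> F} | P [ffun i => x (lshift m i)]]|
  = (#|[set z | P z]| * #|F| ^ m)%N.
Proof.
pose g (p : {ffun 'I_h -> F} * {ffun 'I_m -> F}) : {ffun 'I_(h+m) -> F} :=
  [ffun i => match split i with inl a => p.1 a | inr b => p.2 b end].
have ginj : injective g.
  move=> [z1 w1] [z2 w2] E; congr pair; apply/ffunP => a.
    by have := congr1 (fun f : {ffun 'I_(h+m) -> F} => f (lshift m a)) E; rewrite !ffunE split_l.
  by have := congr1 (fun f : {ffun 'I_(h+m) -> F} => f (rshift h a)) E; rewrite !ffunE split_r.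
have -> : [set x : {ffun 'I_(h+m) -> F} | P [ffun i => x (lshift m i)]]
   = g @: setX [set z | P z] [set: {ffun 'I_m -> F}].
  apply/setP => x; rewrite inE; apply/idP/imsetP.
    move=> Px; exists ([ffun a => x (lshift m a)], [ffun b => x (rshift h b)]).
      by rewrite !inE andbT.
    apply/ffunP => i; rewrite ffunE; case: splitP => j Hj; rewrite ffunE /=;
      congr (x _); apply: val_inj => /=; by rewrite Hj.
  move=> [[z w]]; rewrite !inE andbT => Pz ->.
  suff -> : [ffun i => g (z, w) (lshift m i)] = z by [].
  by apply/ffunP => a; rewrite !ffunE split_l.
by rewrite card_imset // cardsX cardsT card_ffun card_ord.
Qed.
Lemma stepA (F : finFieldType) (h : nat) :
  (#|[set z : {ffun 'I_h -> F} | ((\sum_(i < h) z i) * (\prod_(i < h) z i) == 0)%R]|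
   + (#|F| - 1) ^ h = #|F| ^ h + psi F h)%N.
Proof.
set S := [set z : {ffun 'I_h -> F} | _].
set N := [set z : {ffun 'I_h -> F} | [forall i, z i != 0]].
have hN : #|N| = ((#|F| - 1) ^ h)%N.
  transitivity #|ffun_on_mem 'I_h (mem (predC1 (0:F)))|; last first.
    by rewrite card_ffun_on card_ord cardC1 subn1.
  apply: eq_card => z; rewrite inE; apply/forallP/ffun_onP => H i; have := H i;
    by rewrite !inE.
have hC : ~: S = N :\: [set z : {ffun 'I_h -> F} | ((\sum_(i < h) z i == 0)%R && [forall i, z i != 0])].
  apply/setP => z.
  have hp : (\prod_(i<h) z i != 0) = [forall i, z i != 0].
    by apply/prodf_neq0/forallP => H i *; apply: H.
  rewrite !inE mulf_eq0 negb_or hp.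
  by case: (\sum_(i<h) z i == 0); case: [forall i, z i != 0].
have hsub : [set z : {ffun 'I_h -> F} | ((\sum_(i < h) z i == 0)%R && [forall i, z i != 0])] \subset N.
  by apply/subsetP => z; rewrite !inE => /andP [].
have := cardsC S; rewrite hC card_ffun card_ord.
rewrite cardsD (setIidPr hsub) -hN /psi => <-.
have := subset_leq_card hsub; lia.
Qed.
Lemma stepC (F : finFieldType) n (l : {ffun 'I_n -> F} -> F) (Q : pred {ffun 'I_n -> F})
   (j0 : 'I_n) (beta : F) :
  beta != 0 ->
  (forall (x : {ffun 'I_n -> F}) d, l [ffun i => x i + (if i == j0 then d else 0)] = l x + beta * d) ->
  (forall (x : {ffun 'I_n -> F}) d, Q [ffun i => x i + (if i == j0 then d else 0)] = Q x) ->
  (#|[set x | (l x == 0)%R && Q x]| * #|F| = #|[set x | Q x]|)%N.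
Proof.
move=> bnz Hl HQ.
pose t d (x : {ffun 'I_n -> F}) := [ffun i => x i + (if i == j0 then d else 0)].
have tinj d : injective (t d).
  move=> x y E; apply/ffunP => i.
  have := congr1 (fun f : {ffun 'I_n -> F} => f i) E; rewrite /t !ffunE; exact: addIr.
have Hc c : #|[set x | (l x == c) && Q x]| = #|[set x | (l x == 0) && Q x]|.
  rewrite -(card_preimset _ (tinj (c / beta))); apply: eq_card => x.
  rewrite !inE /t Hl HQ mulrC divfK // -{2}(add0r c).
  by rewrite (inj_eq (addIr c)).
transitivity (\sum_(c : F) #|[set x | (l x == c) && Q x]|)%N.
  under eq_bigr => c _ do rewrite Hc.
  by rewrite sum_nat_const cardT -cardE mulnC.
rewrite -sum1_card (partition_big l xpredT) //; apply: eq_bigr => c _.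
rewrite -sum1_card; apply: eq_bigl => x; by rewrite !inE andbC.
Qed.

Lemma bigsplit_lt (R : Type) (idx : R) (op : Monoid.law idx) h m (G : 'I_(h+m) -> R) :
  \big[op/idx]_(i : 'I_(h+m) | (i < h)%N) G i = \big[op/idx]_(i < h) G (lshift m i).
Proof.
rewrite big_split_ord /= [X in op _ X]big_pred0 => [|j]; last by rewrite ltnNge leq_addr.
rewrite Monoid.mulm1; apply: eq_bigl => i /=; exact: ltn_ord.
Qed.

Theorem proposition2p1 (F : finFieldType) (h k : nat) (I J : {set 'I_k})
    (a b : 'I_k -> F) :
  (4 <= h)%N -> (h <= k)%N ->
  (forall i, i \in I -> (i < h)%N) ->
  (forall j, j \in J -> (h <= j)%N) ->
  (1 <= #|J|)%N ->
  (forall i, i \in I -> a i != 0) ->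
  (forall j, j \in J -> b j != 0) ->
  let q := #|F| in
  let Lambda := #|[set x : {ffun 'I_k -> F} |
       (\sum_(i in I) a i * x i + \sum_(j in J) b j * x j == 0) &&
       ((\sum_(i : 'I_k | (i < h)%N) x i) * (\prod_(i : 'I_k | (i < h)%N) x i) == 0)]| in
  (Lambda%:Z = (q ^ k.-1)%:Z - (q ^ (k - h - 1) * (q - 1) ^ h)%:Z
                 + (psi F h * q ^ (k - h - 1))%:Z)
  /\ (Lambda%:Z = (q ^ (k - h - 1))%:Z * ((q ^ h)%:Z + (psi F h)%:Z - ((q - 1) ^ h)%:Z)).
Proof.
move=> h4 hk HI HJ J1 Ha Hb.
have [j0 j0J] : exists j0, j0 \in J by apply/card_gt0P.
have hj0 := HJ j0 j0J.
have Ek := subnKC hk; move: (k - h)%N Ek => m Ek; subst k.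
move=> q Lambda.
have m1 : (1 <= m)%N by have := ltn_ord j0; lia.
have E1 : (Lambda * q = #|[set x : {ffun 'I_(h+m) -> F} |
    ((\sum_(i : 'I_(h+m) | (i < h)%N) x i) * (\prod_(i : 'I_(h+m) | (i < h)%N) x i) == 0)%R]|)%N.
  apply: (@stepC F (h+m) (fun x => \sum_(i in I) a i * x i + \sum_(j in J) b j * x j)
     (fun x => (\sum_(i : 'I_(h+m) | (i < h)%N) x i) * (\prod_(i : 'I_(h+m) | (i < h)%N) x i) == 0)
     j0 (b j0) (Hb _ j0J)).
    move=> x d /=.
    have -> : \sum_(i in I) a i * [ffun i => x i + (if i == j0 then d else 0)] i
              = \sum_(i in I) a i * x i.
      apply: eq_bigr => i iI; rewrite ffunE.
      have -> : (i == j0) = false by apply/negbTE; apply/eqP => E; have := HI _ iI; rewrite E; lia.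
      by rewrite addr0.
    under eq_bigr => j _ do rewrite ffunE mulrDr.
    rewrite big_split /= addrA; congr (_ + _).
    rewrite (bigD1 j0) //= eqxx big1 ?addr0 // => j /andP [_ /negbTE ->]; exact: mulr0.
  move=> x d /=; congr (_ * _ == 0).
    apply: eq_bigr => i Hi; rewrite ffunE.
    have -> : (i == j0) = false by apply/negbTE; apply/eqP => E; move: Hi; rewrite E; lia.
    by rewrite addr0.
  apply: eq_bigr => i Hi; rewrite ffunE.
  have -> : (i == j0) = false by apply/negbTE; apply/eqP => E; move: Hi; rewrite E; lia.
  by rewrite addr0.
have E2 : #|[set x : {ffun 'I_(h+m) -> F} |
    ((\sum_(i : 'I_(h+m) | (i < h)%N) x i) * (\prod_(i : 'I_(h+m) | (i < h)%N) x i) == 0)%R]|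
   = (#|[set z : {ffun 'I_h -> F} | ((\sum_(i < h) z i) * (\prod_(i < h) z i) == 0)%R]| * q ^ m)%N.
  rewrite -(@stepB F h m (fun z : {ffun 'I_h -> F} => (\sum_(i < h) z i) * (\prod_(i < h) z i) == 0)).
  apply: eq_card => x; rewrite !inE !bigsplit_lt.
  by congr (_ * _ == 0); apply: eq_bigr => i _; rewrite ffunE.
have E3 := stepA F h.
move: E1 E2 E3; rewrite -/q.
set S := #|[set z : {ffun 'I_h -> F} | _]|.
have q0 : (0 < q)%N by apply/card_gt0P; exists 0.
have -> : ((h + m).-1 = h + (m - 1))%N by lia.
have -> : (q ^ m = q ^ (m - 1) * q)%N by rewrite -expnSr subn1 prednK.
rewrite expnD.
move: (q ^ (m - 1))%N (q ^ h)%N ((q - 1) ^ h)%N (psi F h) => A C B P.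
move=> E1 E2 E3.
have EL : Lambda = (S * A)%N.
  apply/eqP; rewrite -(eqn_pmul2r q0) E1 E2 mulnA //.
rewrite EL; split; nia.
Qed.
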